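(* Let $B_J=L+U\in\mathbb R^{n\times n}$ with $L$ strictly lower triangular, $U$ strictly upper triangular, $L\ne O$ and $U^{(j)}_c\ne O$ for all $j=2,\dots,n$. Then the iteration matrix $T(\mathcal B_{FUTC})$ of the splitting $\mathcal B_{FUTC}=(U^{(n)}_c,U^{(n-1)}_c,\dots,U^{(2)}_c,L)$ and the backward Gauss–Seidel iteration matrix $B_{bGS}=(I-U)^{-1}L$ have the same nonzero eigenvalues.
   Context: For $j\in\{2,\dots,n\}$, $U^{(j)}_c$ is the $n\times n$ matrix whose $j$-th column agrees with the $j$-th column of $U$ in rows $i\le j-1$ and which is zero elsewhere (the $j$-th column of $U$). For $B\in\mathbb R^{n\times n}$, a splitting of $B$ of order $d\ge1$ is an ordered $d$-tuple $\mathcal B=(B_1,\dots,B_d)$ of real $n\times n$ matrices with $B_p\neq O$ for all $p$, $\sum_{p=1}^d B_p=B$, and $B_p\circ B_q=O$ (Hadamard product) for $p\ne q$. The iteration matrix of $\mathcal B$ is the $dn\times dn$ matrix $T(\mathcal B)=(I_{dn}-\mathcal L)^{-1}\mathcal U$, where $\mathcal L,\mathcal U$ are $d\times d$ block matrices with $n\times n$ blocks, $\mathcal L_{ij}=B_j$ if $i>j$ and $O$ otherwise, $\mathcal U_{ij}=B_j$ if $i\le j$ and $O$ otherwise. *)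

(* Defs.v *)
From HB Require Import structures.
From mathcomp Require Import all_boot all_order all_algebra.
From mathcomp Require Import reals.
From mathcomp Require Import complex.

Set Implicit Arguments.
Unset Strict Implicit.
Unset Printing Implicit Defensive.

Import Order.TTheory GRing.Theory Num.Theory.
Local Open Scope ring_scope.

Lemma blk_idx_proof (d n : nat) (i : 'I_(d * n)) : (i %/ n < d)%N.
Proof.
case: n i => [|n] i; first by case: i => i /=; rewrite muln0.
by rewrite ltn_divLR // ltn_ord.
Qed.

Lemma blk_off_proof (d n : nat) (i : 'I_(d * n)) : (i %% n < n)%N.
Proof.
case: n i => [|n] i; first by case: i => i /=; rewrite muln0.
by rewrite ltn_mod.
Qed.

Definition blk_idx (d n : nat) (i : 'I_(d * n)) : 'I_d := Ordinal (blk_idx_proof i).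
Definition blk_off (d n : nat) (i : 'I_(d * n)) : 'I_n := Ordinal (blk_off_proof i).

Definition blockmx {K : pzRingType} (d n : nat) (F : 'I_d -> 'I_d -> 'M[K]_n)
  : 'M[K]_(d * n) :=
  \matrix_(i, j) F (blk_idx i) (blk_idx j) (blk_off i) (blk_off j).

Definition is_splitting {K : pzRingType} (n d : nat) (B : 'M[K]_n)
  (Bs : 'I_d -> 'M[K]_n) : Prop :=
  [/\ (0 < d)%N, forall p, Bs p != 0, \sum_p Bs p = B &
      forall p q, p != q -> forall i j, Bs p i j * Bs q i j = 0].

Definition splitL {K : pzRingType} (n d : nat) (Bs : 'I_d -> 'M[K]_n) :=
  blockmx (fun p q => if (q < p)%N then Bs q else 0).
Definition splitU {K : pzRingType} (n d : nat) (Bs : 'I_d -> 'M[K]_n) :=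
  blockmx (fun p q => if (p <= q)%N then Bs q else 0).

Definition iter_mx {K : comUnitRingType} (n d : nat) (Bs : 'I_d -> 'M[K]_n)
  : 'M[K]_(d * n) :=
  invmx (1%:M - splitL Bs) *m splitU Bs.

(* U_c^{(j)} (j 1-indexed, 2 <= j <= n): keeps column j of U in rows
   1..j-1 and is zero elsewhere.  With 0-based indices: column k = j-1,
   rows i < k. *)
Definition Ucol {K : pzRingType} (n : nat) (U : 'M[K]_n) (j : nat) : 'M[K]_n :=
  \matrix_(i, k) if ((k : nat) == j.-1) && (i < k)%N then U i k else 0.

(* The splitting B_FUTC = (U_c^{(n)}, U_c^{(n-1)}, ..., U_c^{(2)}, L),
   of order n: its p-th component (p = 0..n-1, 0-based) is U_c^{(n-p)}
   for p < n-1 and L for p = n-1. *)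
Definition B_FUTC {K : pzRingType} (n : nat) (L U : 'M[K]_n) : 'I_n -> 'M[K]_n :=
  fun p => if (p < n.-1)%N then Ucol U (n - p) else L.

Definition B_bGS {K : comUnitRingType} (n : nat) (L U : 'M[K]_n) : 'M[K]_n :=
  invmx (1%:M - U) *m L.

Definition cmx {R : rcfType} (m : nat) (A : 'M[R]_m) : 'M[R[i]]_m :=
  map_mx (fun x : R => (x%:C)%C) A.

(* Main.v *)
Require Import Defs.
From HB Require Import structures.
From mathcomp Require Import all_boot all_order all_algebra.
From mathcomp Require Import reals.
From mathcomp Require Import complex.
From mathcomp Require Import zify.

Set Implicit Arguments.
Unset Strict Implicit.
Unset Printing Implicit Defensive.
Import Order.TTheory GRing.Theory Num.Theory.
Local Open Scope ring_scope.

Section Idx.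
Variables d n : nat.
Lemma mk_proof (p : 'I_d) (k : 'I_n) : (p * n + k < d * n)%N.
Proof. case: p k => p hp [k hk] /=. nia. Qed.
Definition mk (p : 'I_d) (k : 'I_n) : 'I_(d * n) := Ordinal (mk_proof p k).

Lemma blk_idx_mk p k : blk_idx (mk p k) = p.
Proof.
apply: val_inj => /=; case: n k => [|n'] [k hk] //=.
by rewrite divnMDl // divn_small // addn0.
Qed.
Lemma blk_off_mk p k : blk_off (mk p k) = k.
Proof.
apply: val_inj => /=; case: n k => [|n'] [k hk] //=.
by rewrite modnMDl modn_small.
Qed.
Lemma mk_blk (i : 'I_(d * n)) : mk (blk_idx i) (blk_off i) = i.
Proof. by apply: val_inj => /=; rewrite -divn_eq. Qed.

Lemma sum_split (K : nmodType) (F : 'I_(d * n) -> K) :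
  \sum_(i < d * n) F i = \sum_(p < d) \sum_(k < n) F (mk p k).
Proof.
rewrite pair_bigA /= (reindex (fun pk : 'I_d * 'I_n => mk pk.1 pk.2)) //=.
exists (fun i => (blk_idx i, blk_off i)) => [[p k] _|i _] /=.
  by rewrite blk_idx_mk blk_off_mk.
by rewrite mk_blk.
Qed.
End Idx.

Lemma eig_inv (K : fieldType) m (A B : 'M[K]_m) a : A \in unitmx ->
  eigenvalue (invmx A *m B) a <->
  exists2 w : 'rV_m, w *m B = a *: (w *m A) & w != 0.
Proof.
move=> uA; split.
  move=> /eigenvalueP [v hv nv]; exists (v *m invmx A).
    by rewrite mulmxA in hv; rewrite hv -mulmxA mulVmx // mulmx1.
  by apply: contraNneq nv => h; rewrite -[v]mulmx1 -(mulVmx uA) mulmxA h mul0mx.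
move=> [w hw nw]; apply/eigenvalueP; exists (w *m A).
  by rewrite mulmxA -(mulmxA w) mulmxV // mulmx1.
apply: contraNneq nw => h; rewrite -[w]mulmx1 -(mulmxV uA) mulmxA h mul0mx.
done.
Qed.

Lemma unit_splitL (K : fieldType) d n (Bs : 'I_d -> 'M[K]_n) :
  1%:M - splitL Bs \in unitmx.
Proof.
rewrite unitmxE det_trig.
  rewrite big1 ?unitr1 // => i _; rewrite !mxE eqxx ltnn /=.
  by rewrite mxE subr0.
apply/is_trig_mxP => i j lij; rewrite !mxE.
have -> : (i == j) = false by apply/eqP => h; move: lij; rewrite h ltnn.
have -> : (blk_idx j < blk_idx i)%N = false.
  apply/negbTE; rewrite -leqNgt /=; apply: leq_div2r; exact: ltnW.
by rewrite mxE subr0.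
Qed.

Lemma unit_IU (K : fieldType) n (U : 'M[K]_n) :
  (forall i j : 'I_n, (j <= i)%N -> U i j = 0) -> 1%:M - U \in unitmx.
Proof.
move=> hU; rewrite unitmxE -det_tr det_trig.
  by rewrite big1 ?unitr1 // => i _; rewrite !mxE eqxx hU // subr0.
apply/is_trig_mxP => i j lij; rewrite !mxE.
have -> : (j == i) = false by apply/eqP => h; move: lij; rewrite h ltnn.
by rewrite hU ?subr0 // ltnW.

Qed.

Section Map.
Variables (K K' : fieldType) (f : {rmorphism K -> K'}).

Lemma map_iter d n (Bs : 'I_d -> 'M[K]_n) :
  map_mx f (iter_mx Bs) = iter_mx (fun p => map_mx f (Bs p)).
Proof.
rewrite /iter_mx map_mxM map_invmx map_mxB map_mx1; congr (invmx (_ - _) *m _).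
  by apply/matrixP => i j; rewrite !mxE; case: (_ < _)%N; rewrite ?mxE ?raddf0.
by apply/matrixP => i j; rewrite !mxE; case: (_ <= _)%N; rewrite ?mxE ?raddf0.
Qed.

Lemma map_FUTC n (L U : 'M[K]_n) p :
  map_mx f (B_FUTC L U p) = B_FUTC (map_mx f L) (map_mx f U) p.
Proof.
rewrite /B_FUTC; case: ifP => // _.
by apply/matrixP => i j; rewrite !mxE; case: ifP; rewrite ?raddf0.
Qed.

Lemma map_bGS n (L U : 'M[K]_n) :
  map_mx f (B_bGS L U) = B_bGS (map_mx f L) (map_mx f U).
Proof. by rewrite /B_bGS map_mxM map_invmx map_mxB map_mx1. Qed.
End Map.

Lemma map_iter' (K K' : fieldType) (f : {rmorphism K -> K'}) d n
  (Bs : 'I_d -> 'M[K]_n) (Bs' : 'I_d -> 'M[K']_n) :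
  (forall p, map_mx f (Bs p) = Bs' p) ->
  map_mx f (iter_mx Bs) = iter_mx Bs'.
Proof.
move=> hB.
rewrite /iter_mx map_mxM map_invmx map_mxB map_mx1; congr (invmx (_ - _) *m _).
  by apply/matrixP => i j; rewrite !mxE; case: (_ < _)%N; rewrite -?hB ?mxE ?raddf0.
by apply/matrixP => i j; rewrite !mxE; case: (_ <= _)%N; rewrite -?hB ?mxE ?raddf0.
Qed.

Lemma mulU_E (K : fieldType) d n (Bs : 'I_d -> 'M[K]_n) (w : 'rV_(d * n)) W q c :
  (forall p k, w 0 (mk p k) = W p k) ->
  (w *m splitU Bs) 0 (mk q c) = \sum_(k < n) (\sum_(p < d | (p <= q)%N) W p k) * Bs q k c.
Proof.
move=> hw; rewrite mxE sum_split exchange_big /=; apply: eq_bigr => k _.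
rewrite mulr_suml [RHS]big_mkcond /=; apply: eq_bigr => p _.
rewrite /splitU /blockmx !mxE !blk_idx_mk !blk_off_mk hw.
by case: (p <= q)%N; rewrite ?mxE ?mulr0.
Qed.

Lemma mulL_E (K : fieldType) d n (Bs : 'I_d -> 'M[K]_n) (w : 'rV_(d * n)) W q c :
  (forall p k, w 0 (mk p k) = W p k) ->
  (w *m (1%:M - splitL Bs)) 0 (mk q c) =
  W q c - \sum_(k < n) (\sum_(p < d | (q < p)%N) W p k) * Bs q k c.
Proof.
move=> hw; rewrite mulmxBr mulmx1 !mxE hw; congr (_ - _).
rewrite sum_split exchange_big /=; apply: eq_bigr => k _.
rewrite mulr_suml [RHS]big_mkcond /=; apply: eq_bigr => p _.
rewrite /splitL /blockmx !mxE !blk_idx_mk !blk_off_mk hw.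
by case: (q < p)%N; rewrite ?mxE ?mulr0.
Qed.

Section Core.
Variables (K : fieldType) (n : nat) (L U : 'M[K]_n).
Hypothesis hL : forall i j : 'I_n, (i <= j)%N -> L i j = 0.
Hypothesis hU : forall i j : 'I_n, (j <= i)%N -> U i j = 0.
Variable a : K.
Hypothesis ha : a != 0.

Local Notation Bs := (B_FUTC L U).

Lemma FUTC_E (q k c : 'I_n) : Bs q k c =
  if (q < n.-1)%N then (if (c == (n.-1 - q)%N :> nat) then U k c else 0) else L k c.
Proof.
rewrite /B_FUTC; case: ifP => // hq; rewrite mxE.
have -> : ((n - q).-1 = n.-1 - q)%N by lia.
case: eqP => // _; case: ltnP => // hkc; rewrite hU //.
Qed.

Lemma sum_col (c : 'I_n) (y : K) :
  \sum_(p < n | (p < n.-1)%N) (if (c == (n.-1 - p)%N :> nat) then y else 0) =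
  if (0 < c)%N then y else 0.
Proof.
case: ifP => hc.
  have hp0 : ((n.-1 - c)%N < n)%N by have := ltn_ord c; lia.
  rewrite (bigD1 (Ordinal hp0)) /=; last by have := ltn_ord c; lia.
  rewrite ifT; last by apply/eqP; have := ltn_ord c; lia.
  rewrite big1 ?addr0 // => p /andP [hp hne]; case: eqP => // e.
  by move/eqP: hne; case; apply: val_inj => /=; lia.
rewrite big1 // => p hp; case: eqP => // e; move: hc; lia.
Qed.

Lemma sum_W (W : 'I_n -> 'I_n -> K) (g h : 'I_n -> K) (c : 'I_n) :
  (forall p : 'I_n, (p < n.-1)%N -> W p c = if (c == (n.-1 - p)%N :> nat) then g c else 0) ->
  (forall p : 'I_n, ~~ (p < n.-1)%N -> W p c = h c) ->
  (c = 0 :> nat -> g c = 0) ->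
  \sum_(p < n) W p c = g c + h c.
Proof.
move=> h1 h2 h3.
rewrite (bigID (fun p : 'I_n => (p < n.-1)%N)) /=.
rewrite (eq_bigr _ h1) sum_col.
have hn : (n.-1 < n)%N by have := ltn_ord c; lia.
rewrite (bigD1 (Ordinal hn)) /=; last by rewrite ltnn.
rewrite (h2 (Ordinal hn)); last by rewrite /= ltnn.
rewrite big1 ?addr0; last first.
  move=> p /andP [hp hne]; exfalso; move/eqP: hne; apply; apply: val_inj => /=.
  by have := ltn_ord p; move: hp; lia.
case: ifP => // hc; move/negbT: hc; rewrite -leqNgt leqn0 => /eqP hc.
by rewrite h3 // add0r.
Qed.

Lemma supB (W : 'I_n -> 'I_n -> K) :
  (forall p k : 'I_n, (p < n.-1)%N -> k != (n.-1 - p)%N :> nat -> W p k = 0) ->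
  forall q k : 'I_n, (q < n.-1)%N -> (k < (n.-1 - q)%N)%N ->
  \sum_(p < n | (p <= q)%N) W p k = 0.
Proof.
move=> hA q k hq hk; apply: big1 => p hp; apply: hA; first by lia.
by apply/eqP => e; lia.
Qed.

Lemma col_sums (W : 'I_n -> 'I_n -> K) :
  (forall p k : 'I_n, (p < n.-1)%N -> k != (n.-1 - p)%N :> nat -> W p k = 0) ->
  forall q c : 'I_n, (q < n.-1)%N -> c = (n.-1 - q)%N :> nat ->
  \sum_(k < n) (\sum_(p < n | (p <= q)%N) W p k) * Bs q k c = 0 /\
  \sum_(k < n) (\sum_(p < n | (q < p)%N) W p k) * Bs q k c =
    \sum_(j < n) (\sum_(p < n) W p j) * U j c.
Proof.
move=> hA q c hq hc; split.
  apply: big1 => j _; rewrite FUTC_E hq hc eqxx.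
  case: (ltnP j ((n.-1 - q)%N)) => hj; first by rewrite (supB hA) // mul0r.
  by rewrite (@hU j c) ?mulr0 // hc.
apply: eq_bigr => j _; rewrite FUTC_E hq hc eqxx.
rewrite [X in _ = X * _](bigID (fun p : 'I_n => (p <= q)%N)) /=.
case: (ltnP j ((n.-1 - q)%N)) => hj.
  rewrite (supB hA) // add0r; congr (_ * _); apply: eq_bigl => p; by rewrite ltnNge.
by rewrite (@hU j c) ?mulr0 // hc.
Qed.

Lemma last_sums (W : 'I_n -> 'I_n -> K) (q c : 'I_n) : ~~ (q < n.-1)%N ->
  \sum_(k < n) (\sum_(p < n | (p <= q)%N) W p k) * Bs q k c =
    \sum_(k < n) (\sum_(p < n) W p k) * L k c /\
  \sum_(k < n) (\sum_(p < n | (q < p)%N) W p k) * Bs q k c = 0.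
Proof.
move=> hq; split.
  apply: eq_bigr => k _; rewrite FUTC_E (negbTE hq); congr (_ * _).
  apply: eq_bigl => p; move: hq; rewrite -leqNgt; have := ltn_ord p; lia.
apply: big1 => k _; rewrite big1 ?mul0r // => p hp; exfalso.
by move: hq hp; rewrite -leqNgt; have := ltn_ord p; lia.
Qed.

Definition EqW (W : 'I_n -> 'I_n -> K) := forall q c : 'I_n,
  \sum_(k < n) (\sum_(p < n | (p <= q)%N) W p k) * Bs q k c =
     a * (W q c - \sum_(k < n) (\sum_(p < n | (q < p)%N) W p k) * Bs q k c).


Lemma core1 (W : 'I_n -> 'I_n -> K) : EqW W ->
  (exists p k, W p k != 0) ->
  exists2 x : 'rV_n, x *m L = a *: (x *m (1%:M - U)) & x != 0.
Proof.
move=> hW [p0 [k0 nz]].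
have hA : forall p k : 'I_n, (p < n.-1)%N -> k != (n.-1 - p)%N :> nat -> W p k = 0.
  move=> p k hp hk; have := hW p k.
  rewrite big1; last by move=> j _; rewrite FUTC_E hp (negbTE hk) mulr0.
  rewrite [X in _ * (_ - X)]big1; last by move=> j _; rewrite FUTC_E hp (negbTE hk) mulr0.
  by move/esym/eqP; rewrite subr0 mulf_eq0 (negbTE ha) /= => /eqP.
have hC : forall q c : 'I_n, (q < n.-1)%N -> c = (n.-1 - q)%N :> nat ->
    W q c = \sum_(j < n) (\sum_(p < n) W p j) * U j c.
  move=> q c hq hc; have [e1 e2] := col_sums hA hq hc.
  have := hW q c; rewrite e1 e2.
  by move/esym/eqP; rewrite mulf_eq0 (negbTE ha) subr_eq0 => /eqP.
have hD : forall q c : 'I_n, ~~ (q < n.-1)%N ->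
    W q c = (\sum_(j < n) (\sum_(p < n) W p j) * L j c) / a.
  move=> q c hq; have [e1 e2] := last_sums W c hq.
  have := hW q c; rewrite e1 e2 subr0 => ->.
  by rewrite mulrAC divff // mul1r.
set s := fun k : 'I_n => \sum_(p < n) W p k.
have hE : forall c : 'I_n, s c = \sum_(j < n) s j * U j c + (\sum_(j < n) s j * L j c) / a.
  move=> c; rewrite /s; apply: (@sum_W W (fun c => \sum_(j < n) (\sum_(p < n) W p j) * U j c) (fun c => (\sum_(j < n) (\sum_(p < n) W p j) * L j c) / a)).
  - move=> p hp; case: eqP => [e|ne]; first exact: hC.
    by apply: hA => //; apply/eqP.
  - by move=> p hp; apply: hD.
  - move=> c0; apply: big1 => j _; rewrite (@hU j c) ?mulr0 //; lia.
exists (\row_k s k).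
  apply/rowP => c; rewrite mulmxBr mulmx1 !mxE.
  under eq_bigr do rewrite mxE.
  under [X in _ = _ * (_ - X)]eq_bigr do rewrite mxE.
  by rewrite (hE c) addrAC subrr add0r mulrC divfK.
apply/eqP => x0.
have hs : forall k, s k = 0.
  by move=> k; move/rowP: x0 => /(_ k); rewrite !mxE.
move/eqP: nz; apply.
case hp : (p0 < n.-1)%N.
  case: (eqVneq (k0 : nat) (n.-1 - p0)%N) => hk.
    rewrite (hC _ _ hp hk) big1 // => j _.
    by have := hs j; rewrite /s => ->; rewrite mul0r.
  exact: hA.
rewrite hD ?hp // big1 ?mul0r // => j _.
by have := hs j; rewrite /s => ->; rewrite mul0r.
Qed.

Lemma core2 (x : 'rV[K]_n) : x *m L = a *: (x *m (1%:M - U)) -> x != 0 ->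
  exists W, EqW W /\ exists p k, W p k != 0.
Proof.
move=> hx nx.
set g := fun k : 'I_n => \sum_(j < n) x 0 j * U j k.
set h := fun k : 'I_n => (\sum_(j < n) x 0 j * L j k) / a.
pose W := fun p k : 'I_n =>
  if (p < n.-1)%N then (if (k == (n.-1 - p)%N :> nat) then g k else 0) else h k.
have hA : forall p k : 'I_n, (p < n.-1)%N -> k != (n.-1 - p)%N :> nat -> W p k = 0.
  by move=> p k hp hk; rewrite /W hp (negbTE hk).
have hs : forall k, \sum_(p < n) W p k = x 0 k.
  move=> k; rewrite (@sum_W W g h).
  - have := congr1 (fun M : 'rV[K]_n => M 0 k) hx; rewrite /= mulmxBr mulmx1 !mxE => e.
    rewrite /h e mulrC mulKf //.
    by rewrite /g addrCA subrr addr0.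
  - by move=> p hp; rewrite /W hp.
  - by move=> p hp; rewrite /W (negbTE hp).
  - move=> c0; apply: big1 => j _; rewrite (@hU j k) ?mulr0 //; lia.
exists W; split.
  move=> q c; case hq : (q < n.-1)%N.
    case: (eqVneq (c : nat) (n.-1 - q)%N) => hc.
      have [e1 e2] := col_sums hA hq hc.
      rewrite e1 e2; under eq_bigr do rewrite hs.
      by rewrite /W hq hc eqxx subrr mulr0.
    rewrite !big1 ?subr0 ?mulr0; first by rewrite /W hq (negbTE hc) mulr0.
      by move=> j _; rewrite FUTC_E hq (negbTE hc) mulr0.
    by move=> j _; rewrite FUTC_E hq (negbTE hc) mulr0.
  have hq' : ~~ (q < n.-1)%N by rewrite hq.
  have [e1 e2] := last_sums W c hq'.
  rewrite e1 e2 subr0; under eq_bigr do rewrite hs.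
  by rewrite /W hq /h mulrC divfK.
case: (pickP (fun k => x 0 k != 0)) => [k hk | h0]; last first.
  exfalso; move/eqP: nx; apply; apply/rowP => k; rewrite mxE.
  by move: (h0 k) => /negbFE /eqP.
case: (pickP (fun p => W p k != 0)) => [p hp | h0]; first by exists p, k.
exfalso; move: hk; rewrite -hs big1 ?eqxx // => p _.
by move: (h0 p) => /negbFE /eqP.
Qed.

End Core.

Lemma core_thm (K : fieldType) n (L U : 'M[K]_n) :
  (forall i j : 'I_n, (i <= j)%N -> L i j = 0) ->
  (forall i j : 'I_n, (j <= i)%N -> U i j = 0) ->
  forall a : K, a != 0 ->
  eigenvalue (iter_mx (B_FUTC L U)) a <-> eigenvalue (B_bGS L U) a.
Proof.
move=> hL hU a ha; rewrite /iter_mx /B_bGS; split.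
  move/(eig_inv _ _ (unit_splitL _)) => [w hw nw].
  apply/(eig_inv _ _ (unit_IU hU)).
  apply: (core1 hU ha (W := fun p k => w 0 (mk p k))).
    move=> q c.
    have := congr1 (fun M : 'rV[K]_(n * n) => M 0 (mk q c)) hw => /=.
    rewrite (mulU_E _ (W := fun p k => w 0 (mk p k))) // mxE.
    by rewrite (mulL_E _ (W := fun p k => w 0 (mk p k))).
  case: (pickP (fun i => w 0 i != 0)) => [i hi | h0]; last first.
    exfalso; move/eqP: nw; apply; apply/rowP => k; rewrite mxE.
    by move: (h0 k) => /negbFE /eqP.
  by exists (blk_idx i), (blk_off i); rewrite mk_blk.
move/(eig_inv _ _ (unit_IU hU)) => [x hx nx].
have [W [hW [p [k nz]]]] := core2 hU ha hx nx.
apply/(eig_inv _ _ (unit_splitL _)).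
pose w : 'rV[K]_(n * n) := \row_i W (blk_idx i) (blk_off i).
have hw : forall p k, w 0 (mk p k) = W p k.
  by move=> p' k'; rewrite mxE blk_idx_mk blk_off_mk.
exists w.
  apply/rowP => i; rewrite -(mk_blk i).
  by rewrite (mulU_E _ _ _ hw) mxE (mulL_E _ _ _ hw) hW.
by apply/eqP => w0; move/eqP: nz; apply; rewrite -hw w0 mxE.
Qed.

Unset Implicit Arguments.
Theorem theorem6p1 (R : realType) (n : nat) (L U : 'M[R]_n) :
  (forall i j : 'I_n, (i <= j)%N -> L i j = 0) ->
  (forall i j : 'I_n, (j <= i)%N -> U i j = 0) ->
  L != 0 ->
  (forall j : nat, (2 <= j <= n)%N -> Ucol U j != 0) ->
  forall lambda : R[i], lambda != 0 ->
    (eigenvalue (cmx (iter_mx (B_FUTC L U))) lambda <->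
     eigenvalue (cmx (B_bGS L U)) lambda).
Proof.
move=> hL hU _ _ a ha.
rewrite /cmx -/(map_mx (real_complex R) _).
rewrite (map_iter' (Bs' := B_FUTC (map_mx (real_complex R) L) (map_mx (real_complex R) U))); last first.
  by move=> p; rewrite map_FUTC.
rewrite map_bGS; apply: core_thm => // i j hij; rewrite mxE ?hL ?hU ?raddf0 //.
Qed.
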